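(* Let $n\ge2$ be even, $r\ge1$, $V=\{1,\dots,n\}$, $R=\{n+1,\dots,n+r\}$, and let $G^R$ be a graph on $V\cup R$ with $G$ its induced subgraph on $V$. Let $M_0$ be a perfect matching of $G$ and let $F$ be an RC-rooted spanning forest of $G^R$ compatible with $M_0$, with cycles $C_1,\dots,C_{k}$ ($k\ge0$). For $(\varepsilon_1,\dots,\varepsilon_k)\in\{0,1\}^k$, let $M^{(\varepsilon_1,\dots,\varepsilon_k)}$ be the edge set consisting of: the edges of $M_0$ lying on branches of $F$ (i.e. not on cycles); for each $j$ with $\varepsilon_j=0$, the edges of $M_0$ on $C_j$; for each $j$ with $\varepsilon_j=1$, the edges of $F\setminus M_0$ on $C_j$ (and $M^{()}=M_0$ if $k=0$). Then for every $(\varepsilon_1,\dots,\varepsilon_k)\in\{0,1\}^k$, $M^{(\varepsilon_1,\dots,\varepsilon_k)}$ is a perfect matching of $G$.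
   Context: An RC-rooted spanning forest (RCRSF) of $G^R$ is a set of oriented edges of $G^R$ spanning the vertices of $V$ such that each connected component is either a tree rooted at a vertex of $R$, or a tree rooted on a cycle of $G$ (a unicycle); edges of components are oriented towards the root, and cycles are oriented in one of the two directions. An RCRSF $F$ is compatible with $M_0$ if it consists of the $n/2$ edges of $M_0$ together with $n/2$ edges of $G^R$ not in $M_0$, and moreover every cycle of its unicycles has even length $\ge4$ and alternates between edges of $M_0$ and edges of $F\setminus M_0$. *)

(* Defs.v *)
From mathcomp Require Import all_boot.
Set Implicit Arguments. Unset Strict Implicit. Unset Printing Implicit Defensive.

Section Defs.
Variable T : finType.

Definition simple_graph (e : rel T) := symmetric e /\ irreflexive e.

Definition und (a : T * T) : {set T} := [set a.1; a.2].

Definition edge_in (e : rel T) (V : {set T}) (m : {set T}) : Prop :=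
  exists u v, [/\ m = [set u; v], u != v, e u v, u \in V & v \in V].

Definition perfect_matching (e : rel T) (V : {set T}) (M : {set {set T}}) :=
  (forall m, m \in M -> edge_in e V m) /\
  (forall x, x \in V -> #|[set m in M | x \in m]| = 1).

Definition Frel (F : {set T * T}) : rel T := fun x y => (x, y) \in F.

(* RC-rooted spanning forest of G^R (vertex set V u R = T), given as its set
   of oriented edges, oriented towards the roots: every vertex of V has exactly
   one outgoing edge, roots (vertices of R) have none, every edge is an edge of
   G^R, and no edge is used in both directions (so the cycles of the unicycles
   are genuine cycles of G, of length >= 3).  Each weak component is then
   either a tree rooted at a vertex of R or a unicycle. *)
Definition RCRSF (e : rel T) (V R : {set T}) (F : {set T * T}) :=
  [/\ forall a, a \in F -> e a.1 a.2,
      forall x, x \in V -> #|[set y | (x, y) \in F]| = 1,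
      forall x y, x \in R -> (x, y) \notin F
    & forall x y, (x, y) \in F -> (y, x) \notin F].

Definition cyclic (F : {set T * T}) (x : T) : bool :=
  [exists y, ((x, y) \in F) && connect (Frel F) y x].

Definition cycle_of (F : {set T * T}) (x : T) : {set T} :=
  [set y | connect (Frel F) x y && connect (Frel F) y x].

Definition cycles (F : {set T * T}) : {set {set T}} :=
  [set cycle_of F x | x in [set x | cyclic F x]].

Definition on_cycle (F : {set T * T}) (m C : {set T}) : bool :=
  [exists a in F, (und a == m) && (a.1 \in C) && (a.2 \in C)].

Definition compatible (n : nat) (F : {set T * T}) (M0 : {set {set T}}) :=
  [/\ forall m, m \in M0 -> exists2 a, a \in F & und a = m,
      #|[set a in F | und a \in M0]| = n./2,
      #|[set a in F | und a \notin M0]| = n./2,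
      forall C, C \in cycles F -> ~~ odd #|C| /\ 4 <= #|C|
    & forall u v w, cyclic F u -> (u, v) \in F -> (v, w) \in F ->
        (und (u, v) \in M0) != (und (v, w) \in M0)].

(* M^(eps): S is the set of cycles C_j with eps_j = 1. *)
Definition M_eps (F : {set T * T}) (M0 : {set {set T}}) (S : {set {set T}})
  : {set {set T}} :=
  [set m | [|| (m \in M0) && ~~ [exists C in cycles F, on_cycle F m C],
              [exists C in cycles F, (C \notin S) && (m \in M0) && on_cycle F m C]
            | [exists C in cycles F, (C \in S) && (m \notin M0) && on_cycle F m C]]].

End Defs.

Definition Vset (n r : nat) : {set 'I_(n + r)} := [set x : 'I_(n + r) | x < n].
Definition Rset (n r : nat) : {set 'I_(n + r)} := [set x : 'I_(n + r) | n <= x].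

(* Main.v *)
Require Import Defs.
From mathcomp Require Import all_boot.

Theorem lemma6 (n r : nat) (e : rel 'I_(n + r))
    (F : {set 'I_(n + r) * 'I_(n + r)}) (M0 : {set {set 'I_(n + r)}}) :
  2 <= n -> ~~ odd n -> 1 <= r ->
  simple_graph e ->
  perfect_matching e (Vset n r) M0 ->
  RCRSF e (Vset n r) (Rset n r) F ->
  compatible n F M0 ->
  forall S : {set {set 'I_(n + r)}}, S \subset cycles F ->
    perfect_matching e (Vset n r) (M_eps F M0 S).
Proof.
have ctrans (T : finType) (g : T -> T) a b c : fconnect g a b -> fconnect g b c -> fconnect g a c := fun H1 H2 => connect_trans H1 H2.
move=> n2 nodd r1 [esym eirr] [M0e M0c] [Fe FV FR Fanti] [_ _ _ _ Falt] S SS.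
set V := Vset n r.
have VR x : (x \in Rset n r) = (x \notin V) by rewrite !inE -leqNgt.
have FinV x y : (x, y) \in F -> x \in V.
  move=> H; apply: contraLR H; rewrite -VR => xR; exact: FR.
pose f x := odflt x [pick y | (x, y) \in F].
have fF x y : (x, y) \in F -> f x = y.
  move=> H; have /eqP/cards1P [y0 Hy0] := FV x (FinV _ _ H).
  have Hy : y \in [set y | (x, y) \in F] by rewrite inE.
  rewrite Hy0 inE in Hy; rewrite (eqP Hy) /f; case: pickP => [w Hw|/(_ y0)] /=.
  - have: w \in [set y | (x, y) \in F] by rewrite inE.
    by rewrite Hy0 inE => /eqP.
  - have: y0 \in [set y | (x, y) \in F] by rewrite Hy0 set11.
    by rewrite inE => ->.
have fV x : x \in V -> (x, f x) \in F.
  move=> xV; rewrite /f; case: pickP => [w Hw //|H].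
  have /eqP/cards1P [y0 Hy0] := FV x xV.
  have: y0 \in [set y | (x, y) \in F] by rewrite Hy0 set11.
  by rewrite inE H.
have fR x : (x, f x) \notin F -> f x = x.
  rewrite /f; case: pickP => [w Hw|_] //=. by rewrite Hw.
have conn x y : connect (Frel F) x y = fconnect f x y.
  apply/idP/idP; apply: connect_sub => u v.
  - rewrite /Frel => /fF <-; exact: fconnect1.
  - move=> /eqP <-; case: (boolP ((u, f u) \in F)) => H; first exact: connect1.
    by rewrite (fR _ H) connect0.
have cycE x : cyclic F x = ((x, f x) \in F) && fconnect f (f x) x.
  apply/existsP/andP => [[y /andP [H C]]|[H C]].
  - by rewrite (fF _ _ H) -conn; split.
  - by exists (f x); rewrite H conn.
have coE x : cycle_of F x = [set y | fconnect f x y && fconnect f y x].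
  by apply/setP => y; rewrite !inE !conn.
have fixc y z : f y = y -> fconnect f y z -> z = y.
  move=> fy /connectP [p]; elim: p y fy => [|a p IH] y fy /=; first by move=> _ ->.
  move=> /andP [/eqP]; rewrite fy => <- Hp Hl; exact: IH Hp Hl.
have K1 z y : cyclic F z -> y \in cycle_of F z ->
    cyclic F y /\ cycle_of F y = cycle_of F z.
  move=> Hzc; move: (Hzc); rewrite cycE coE inE => /andP [Hz Cz] /andP [zy yz].
  have cy : cyclic F y.
    rewrite cycE; case: (eqVneq y z) => [->|nyz]; first by rewrite Hz.
    move: (yz); rewrite fconnect_eqVf (negbTE nyz) /= => fyz.
    case: (boolP ((y, f y) \in F)) => H /=.
    - exact: ctrans _ _ _ _ _ fyz zy.
    - by move: nyz; rewrite (fixc y z (fR _ H) yz) eqxx.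
  split=> //; apply/setP => w; rewrite !coE !inE.
  apply/andP/andP => [[a b]|[a b]]; split.
  - exact: ctrans _ _ _ _ _ zy a.
  - exact: ctrans _ _ _ _ _ b yz.
  - exact: ctrans _ _ _ _ _ yz a.
  - exact: ctrans _ _ _ _ _ b zy.
have cycV y : cyclic F y -> y \in V.
  by rewrite cycE => /andP [H _]; exact: FinV H.
have cyclesP C : C \in cycles F -> exists2 z, cyclic F z & C = cycle_of F z.
  by case/imsetP => z; rewrite inE => ? ->; exists z.
have undE (a : 'I_(n + r) * 'I_(n + r)) : und a = [set a.1; a.2] by [].
have OC m C : C \in cycles F -> on_cycle F m C ->
    exists a, [/\ a \in F, m = [set a.1; a.2], cyclic F a.1, cyclic F a.2
                & C = cycle_of F a.1 /\ C = cycle_of F a.2].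
  move=> /cyclesP [z Hz ->] /existsP [a /andP [aF /andP [/andP [/eqP am a1] a2]]].
  have [c1 e1] := K1 _ _ Hz a1; have [c2 e2] := K1 _ _ Hz a2.
  by exists a; split.
split.
- move=> m; rewrite inE => /or3P [/andP [mM _]|
      /existsP [C /andP [_ /andP [/andP [_ mM] _]]]|
      /existsP [C /andP [CC /andP [_ oc]]]]; try exact: M0e.
  have [a [aF -> c1 c2 _]] := OC _ _ CC oc.
  exists a.1, a.2; split => //; try exact: cycV.
  + apply/eqP => ea; move: (Fe a aF); rewrite ea.
    by move: (eirr a.2) => /= ->.
  + exact: Fe.
move=> x xV.
have /eqP/cards1P [m0 Hm0] := M0c x xV.
have m0M : m0 \in M0 by have := set11 m0; rewrite -Hm0 inE => /andP [].
have xm0 : x \in m0 by have := set11 m0; rewrite -Hm0 inE => /andP [].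
have uM m : m \in M0 -> x \in m -> m = m0.
  by move=> mM xm; apply/set1P; rewrite -Hm0 inE mM.
have OCx m C : C \in cycles F -> on_cycle F m C -> x \in m ->
    cyclic F x /\ C = cycle_of F x.
  move=> CC oc xm; have [a [aF me c1 c2 [e1 e2]]] := OC _ _ CC oc.
  by move: xm; rewrite me !inE => /orP [] /eqP ->.
apply/eqP/cards1P.
case: (boolP (cyclic F x)) => xc; last first.
  exists m0; apply/setP => m; rewrite !inE.
  apply/andP/eqP => [[]|->].
  - move=> /or3P [/andP [mM _]|
      /existsP [C /andP [CC /andP [_ oc]]]|
      /existsP [C /andP [CC /andP [_ oc]]]] xm.
    + exact: uM.
    + by have [] := OCx _ _ CC oc xm; rewrite (negbTE xc).
    + by have [] := OCx _ _ CC oc xm; rewrite (negbTE xc).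
  - split => //; rewrite m0M /=; apply/orP; left.
    apply/existsP => [[C /andP [CC oc]]].
    by have [] := OCx _ _ CC oc xm0; rewrite (negbTE xc).
set C := cycle_of F x.
have CC : C \in cycles F by apply: imset_f; rewrite inE.
move: (xc); rewrite cycE => /andP [xs Hc].
set s := f x in xs Hc.
have cyc := (orbitPcycle 2 0).1 Hc.
have inj := (orbitPcycle 2 5).1 Hc.
set p := prev (orbit f x) x.
have pO : p \in orbit f x by rewrite mem_prev in_orbit.
have fp : f p = x.
  have := next_cycle cyc pO; rewrite /p next_prev ?orbit_uniq //.
  by move=> /eqP.
have pC : p \in C by rewrite /C coE inE fconnect_orbit pO /= -fp fconnect1.
have xC : x \in C by rewrite /C coE inE connect0.
have sC : s \in C by rewrite /C coE inE fconnect1 Hc.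
have [pc _] := K1 _ _ xc pC.
have px : (p, x) \in F by move: pc; rewrite cycE fp => /andP [].
have uq q : q \in C -> (q, x) \in F -> q = p.
  rewrite /C coE inE => /andP [xq _] /fF fq; apply: inj => //.
  - by rewrite -fconnect_orbit.
  - by rewrite fq fp.
have alt := Falt p x s pc px xs.
rewrite !undE /= in alt.
set mp := [set p; x] in alt; set ms := [set x; s] in alt.
have onC m : (m == mp) || (m == ms) -> on_cycle F m C.
  case/orP => /eqP ->; apply/existsP.
  - by exists (p, x); rewrite px undE /= eqxx pC xC.
  - by exists (x, s); rewrite xs undE /= eqxx sC xC.
have onx m C' : C' \in cycles F -> on_cycle F m C' -> x \in m ->
    C' = C /\ ((m == mp) || (m == ms)).
  move=> CC' oc xm; have [_ eC] := OCx _ _ CC' oc xm; split => //.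
  move: oc; rewrite eC => /existsP [[u v] /andP [aF /andP [/andP [/eqP am uC] vC]]].
  move: xm; rewrite -am undE !inE /= => /orP [] /eqP ex.
  - have fv := fF _ _ aF; rewrite -ex in fv.
    by rewrite -fv -ex /ms eqxx orbT.
  - rewrite -ex in aF; have -> : u = p by apply: uq.
    by rewrite -ex /mp eqxx.
have m0E : m0 = if mp \in M0 then mp else ms.
  case: ifP => H.
  - by rewrite (uM mp) // /mp !inE eqxx orbT.
  - have H' : ms \in M0 by move: alt; rewrite H; case: (ms \in M0).
    by rewrite (uM ms) // /ms !inE eqxx.
have m0c : [exists C' in cycles F, on_cycle F m0 C'].
  by apply/existsP; exists C; rewrite CC onC // m0E; case: ifP; rewrite eqxx ?orbT.
case: (boolP (C \in S)) => CS.
- exists (if mp \in M0 then ms else mp); apply/setP => m; rewrite !inE.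
  apply/andP/eqP => [[]|->].
  + move=> /or3P [/andP [mM nc]|
      /existsP [C' /andP [CC' /andP [/andP [C'S _] oc]]]|
      /existsP [C' /andP [CC' /andP [/andP [_ mM] oc]]]] xm.
    * by move: nc; rewrite (uM m) // m0c.
    * by have [eC _] := onx _ _ CC' oc xm; move: C'S; rewrite eC CS.
    * have [_ /orP [] /eqP em] := onx _ _ CC' oc xm; move: mM; rewrite em => mM.
        by rewrite (negbTE mM).
      by case: ifP => // H; move: alt; rewrite H (negbTE mM).
  + split; last by case: ifP; rewrite !inE eqxx ?orbT.
    apply/orP; right; apply/orP; right; apply/existsP; exists C.
    rewrite CC CS /= onC ?andbT; last by case: ifP; rewrite eqxx ?orbT.
    case: ifP => H; last by rewrite H.
    by apply/negP => H2; move: alt; rewrite H H2.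
- exists m0; apply/setP => m; rewrite !inE.
  apply/andP/eqP => [[]|->].
  + move=> /or3P [/andP [mM _]|
      /existsP [C' /andP [CC' /andP [/andP [_ mM] oc]]]|
      /existsP [C' /andP [CC' /andP [/andP [C'S _] oc]]]] xm.
    * exact: uM.
    * exact: uM.
    * by have [eC _] := onx _ _ CC' oc xm; move: C'S; rewrite eC (negbTE CS).
  + split => //; apply/orP; right; apply/orP; left; apply/existsP; exists C.
    rewrite CC CS m0M /= onC // m0E; case: ifP; rewrite eqxx ?orbT //.
Qed.
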